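(* Let $F_1,\dots,F_n:\mathbb{R}^d\to\mathbb{R}^d$ with each $F_i$ $L_i$-Lipschitz, $F=\frac1n\sum_iF_i$, $L_{max}=\max_iL_i$. If the extrapolation step size of SEG-RR satisfies $\gamma_2\le\frac1{L_{max}}$, then for every epoch $k$, $$\mathbb{E}_k\Big[\sum_{i=0}^{n-1}\|F_{\pi_i^k}(\bar z_i^k)-F_{\pi_i^k}(\hat z_0^k)\|^2\Big]\le6L_{max}^2\,\mathbb{E}_k\Big[\sum_{i=0}^{n-1}\|z_i^k-z_0^k\|^2\Big]+3L_{max}^2\gamma_2^2\,\mathbb{E}_k\Big[\sum_{i=0}^{n-1}\|F_{\pi_i^k}(z_0^k)-F(z_0^k)\|^2\Big],$$ where $\hat z_0^k=z_0^k-\gamma_2F(z_0^k)$.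
   Context: SEG-RR with step sizes $\gamma_1,\gamma_2>0$: for each epoch $k$, with current point $z_0^k$, draw a permutation $\pi^k=(\pi^k_0,\dots,\pi^k_{n-1})$ of $\{1,\dots,n\}$ uniformly at random, independently of the past; for $i=0,\dots,n-1$ set $\bar z_i^k=z_i^k-\gamma_2F_{\pi_i^k}(z_i^k)$, $z_{i+1}^k=z_i^k-\gamma_1F_{\pi_i^k}(\bar z_i^k)$; then $z_0^{k+1}=z_n^k$. $\mathbb{E}_k$ denotes expectation over $\pi^k$ conditional on the history up to $z_0^k$. *)

(* Defs.v *)
From HB Require Import structures.
From mathcomp Require Import all_boot all_order all_algebra all_fingroup.
From mathcomp Require Import reals.
Set Implicit Arguments. Unset Strict Implicit. Unset Printing Implicit Defensive.
Import Order.TTheory GRing.Theory Num.Theory.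
Local Open Scope ring_scope.

Section SEGRR.
Variables (R : realType) (d n : nat).
Notation V := 'rV[R]_d.

Definition sqnorm (v : V) : R := \sum_(j < d) (v 0 j) ^+ 2.
Definition enorm (v : V) : R := Num.sqrt (sqnorm v).

Definition lipschitz (G : V -> V) (L : R) : Prop :=
  forall x y, enorm (G x - G y) <= L * enorm (x - y).

Definition Favg (F : 'I_n -> V -> V) (z : V) : V := n%:R^-1 *: \sum_(i < n) F i z.

Definition Lmax (L : 'I_n -> R) : R := \big[Num.max/0]_(i < n) L i.

(* SEG-RR epoch with permutation s, starting at z0:
   seg_iterates = [:: z_1; ...; z_n], z_i = nth z0 (z0 :: seg_iterates) i *)
Definition seg_iterates (F : 'I_n -> V -> V) (g1 g2 : R) (s : {perm 'I_n}) (z0 : V)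
  : seq V :=
  scanl (fun z j => z - g1 *: F j (z - g2 *: F j z)) z0 [seq s i | i <- enum 'I_n].

Definition seg_z (F : 'I_n -> V -> V) (g1 g2 : R) (s : {perm 'I_n}) (z0 : V)
  (i : nat) : V := nth z0 (z0 :: seg_iterates F g1 g2 s z0) i.

Definition seg_zbar (F : 'I_n -> V -> V) (g1 g2 : R) (s : {perm 'I_n}) (z0 : V)
  (i : 'I_n) : V :=
  seg_z F g1 g2 s z0 i - g2 *: F (s i) (seg_z F g1 g2 s z0 i).

(* expectation over a uniformly random permutation of {0,...,n-1}
   (conditional on the history up to z_0^k, which is fixed) *)
Definition Eperm (X : {perm 'I_n} -> R) : R :=
  (\sum_(s : {perm 'I_n}) X s) / #|{: {perm 'I_n}}|%:R.

End SEGRR.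

(* Main.v *)
Require Import Defs.
From HB Require Import structures.
From mathcomp Require Import all_boot all_order all_algebra all_fingroup.
From mathcomp Require Import reals.
From mathcomp Require Import ring lra.
Import Order.TTheory GRing.Theory Num.Theory.
Local Open Scope ring_scope.

Section Aux.
Variables (R : realType) (d : nat).

Lemma sqnorm_ge0 (v : 'rV[R]_d) : 0 <= sqnorm v.
Proof. by apply: sumr_ge0 => j _; rewrite sqr_ge0. Qed.

Lemma sqnorm3 (a b c : 'rV[R]_d) :
  sqnorm (a + b + c) <= 3 * (sqnorm a + sqnorm b + sqnorm c).
Proof.
rewrite /sqnorm -!big_split /= mulr_sumr; apply: ler_sum => j _.
rewrite !mxE; set x := a 0 j; set y := b 0 j; set z := c 0 j.
have := sqr_ge0 (x - y); have := sqr_ge0 (y - z); have := sqr_ge0 (x - z).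
rewrite !expr2; nra.
Qed.

Lemma sqnormZ (k : R) (v : 'rV[R]_d) : sqnorm (k *: v) = k ^+ 2 * sqnorm v.
Proof.
rewrite /sqnorm mulr_sumr; apply: eq_bigr => j _; rewrite mxE exprMn //.
Qed.

Lemma lip_sq (G : 'rV[R]_d -> 'rV[R]_d) (L : R) x y :
  0 <= L -> lipschitz G L -> sqnorm (G x - G y) <= L ^+ 2 * sqnorm (x - y).
Proof.
move=> L0 /(_ x y); rewrite /enorm => H.
have h1 := sqr_sqrtr (sqnorm_ge0 (G x - G y)).
have h2 := sqr_sqrtr (sqnorm_ge0 (x - y)).
have h3 := sqrtr_ge0 (sqnorm (G x - G y)).
have h4 := sqrtr_ge0 (sqnorm (x - y)).
rewrite -h1 -h2; move: H h3 h4.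
set A := Num.sqrt _; set B := Num.sqrt _ => H h3 h4.
have h5 : 0 <= L * B by rewrite mulr_ge0.
rewrite -exprMn; rewrite !expr2; nra.
Qed.
Lemma arith (A B C g l m : R) : 0 <= A -> 0 <= B -> 0 <= C -> 0 < g ->
  0 <= l -> l <= m -> g * l <= 1 -> B <= l ^+ 2 * A ->
  l ^+ 2 * (3 * (A + g ^+ 2 * B + g ^+ 2 * C)) <=
  6 * m ^+ 2 * A + 3 * m ^+ 2 * g ^+ 2 * C.
Proof.
move=> A0 B0 C0 g0 l0 lm gl hB.
have gl2 : (g * l) ^+ 2 <= 1 by rewrite expr_le1 // mulr_ge0 // ltW.
have hB' : g ^+ 2 * B <= A.
  apply: le_trans (ler_wpM2l (sqr_ge0 _) hB) _.
  by rewrite mulrA -exprMn ler_piMl.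
have ll : l ^+ 2 <= m ^+ 2 by rewrite lerXn2r // nnegrE //; apply: le_trans lm.
have l2 : 0 <= l ^+ 2 by rewrite sqr_ge0.
have gg : 0 <= g ^+ 2 by rewrite sqr_ge0.
have h1 : l ^+ 2 * (A + g ^+ 2 * B + g ^+ 2 * C) <= m ^+ 2 * (A + A + g ^+ 2 * C).
  apply: le_trans (ler_wpM2r _ ll) _; first nra.
  apply: ler_wpM2l; first nra. nra.
nra.
Qed.
End Aux.
Arguments arith {R}.
Arguments sqnorm_ge0 {R d}.
Arguments sqnorm3 {R d}.
Arguments sqnormZ {R d}.
Arguments lip_sq {R d G L}.

Theorem lemma3 (R : realType) (d n : nat)
  (F : 'I_n -> 'rV[R]_d -> 'rV[R]_d) (L : 'I_n -> R)
  (hL0 : forall i, 0 <= L i) (hLip : forall i, lipschitz (F i) (L i))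
  (g1 g2 : R) (hg1 : 0 < g1) (hg2 : 0 < g2)
  (hg2L : g2 * Lmax L <= 1)
  (z0 : 'rV[R]_d) :
  let Lm := Lmax L in
  let zhat := z0 - g2 *: Favg F z0 in
  Eperm (fun s => \sum_(i < n)
           sqnorm (F (s i) (seg_zbar F g1 g2 s z0 i) - F (s i) zhat))
  <= 6 * Lm ^+ 2 * Eperm (fun s => \sum_(i < n) sqnorm (seg_z F g1 g2 s z0 i - z0))
   + 3 * Lm ^+ 2 * g2 ^+ 2 *
       Eperm (fun s => \sum_(i < n) sqnorm (F (s i) z0 - Favg F z0)).
Proof.
cbv zeta.
set Lm := Lmax L; set zhat := z0 - g2 *: Favg F z0.
have LiLm : forall i, L i <= Lm.
  by move=> i; rewrite /Lm /Lmax; apply: le_bigmax.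
have Lm0 : forall i : 'I_n, 0 <= Lm by move=> i; apply: le_trans (LiLm i).
have key : forall (s : {perm 'I_n}) (i : 'I_n),
  sqnorm (F (s i) (seg_zbar F g1 g2 s z0 i) - F (s i) zhat) <=
  6 * Lm ^+ 2 * sqnorm (seg_z F g1 g2 s z0 i - z0) +
  3 * Lm ^+ 2 * g2 ^+ 2 * sqnorm (F (s i) z0 - Favg F z0).
  move=> s i.
  set zi := seg_z F g1 g2 s z0 i.
  set Fi := F (s i).
  have e : seg_zbar F g1 g2 s z0 i - zhat =
    (zi - z0) + (- g2) *: (Fi zi - Fi z0) + (- g2) *: (Fi z0 - Favg F z0).
    rewrite /seg_zbar /zhat -/zi -/Fi !scaleNr !scalerBr.
    move: (Fi zi) (Fi z0) (Favg F z0) => u v w.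
    clearbody zi; rewrite !opprB !addrA; apply/eqP; rewrite -subr_eq0; apply/eqP.
    apply/rowP => j; rewrite !mxE.
    move: (zi 0 j) (z0 0 j) (u 0 j) (v 0 j) (w 0 j) => a b c e f; ring.
  apply: le_trans (lip_sq _ _ (hL0 (s i)) (hLip (s i))) _; rewrite -/Fi.
  rewrite e; apply: le_trans (ler_wpM2l (sqr_ge0 _) (sqnorm3 _ _ _)) _.
  rewrite !sqnormZ !sqrrN.
  apply: (arith _ _ _ g2 (L (s i)) Lm).
  - exact: sqnorm_ge0.
  - exact: sqnorm_ge0.
  - exact: sqnorm_ge0.
  - exact: hg2.
  - exact: hL0.
  - exact: LiLm.
  - by apply: le_trans hg2L; rewrite ler_wpM2l // ltW.
  - exact: (lip_sq zi z0 (hL0 (s i)) (hLip (s i))).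
rewrite /Eperm.
have P0 : 0 <= (#|{: {perm 'I_n}}|%:R : R)^-1 by rewrite invr_ge0 ler0n.
rewrite !mulrA -mulrDl; apply: ler_wpM2r => //.
rewrite !mulr_sumr -big_split /=; apply: ler_sum => s _.
rewrite !mulr_sumr -big_split /=; apply: ler_sum => i _.

have := key s i; rewrite !expr2 !mulrA; exact.
Qed.
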